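(* Let $A\in\mathbb{R}^{n\times n}$ with spectral radius $\rho(A)<1$, let $C\in\mathbb{R}^{m\times n}$, and let $Q\in\mathbb{R}^{n\times n}$, $R\in\mathbb{R}^{m\times m}$ be symmetric positive definite, with $(A,C)$ observable and $(A,Q^{1/2})$ controllable. Let $\bar P$ be the unique stabilizing positive definite solution of the discrete-time algebraic Riccati equation $$\bar P = A\bar PA^{\intercal}+Q-(A\bar PA^{\intercal}+Q)C^{\intercal}\big(C(A\bar PA^{\intercal}+Q)C^{\intercal}+R\big)^{-1}C(A\bar PA^{\intercal}+Q).$$ Let $\bar\gamma\in(0,1)$ and $\mu\in(0,1)$. Let $(\lambda_k)_{k\ge1}$ be i.i.d. $\{0,1\}$-valued random variables with $\mathbb{P}[\lambda_k=0]=\bar\gamma$, and let $(u_k)_{k\ge1}$ be i.i.d. $\{0,1\}$-valued random variables with $\mathbb{P}[u_k=0]=\mu$, the two sequences being independent of each other. Let $P_0$ be a fixed symmetric positive semidefinite matrix and define recursively, for $k\ge1$, $$P_k=\begin{cases}\bar P, & \text{if } (\lambda_k,u_k)=(1,1),\\ AP_{k-1}A^{\intercal}+Q, & \text{if } \lambda_k=0 \text{ or } (\lambda_k,u_k)=(1,0).\end{cases}$$ Set $q=\bar\gamma+(1-\bar\gamma)\mu$. Then $$\lim_{k\to\infty}\mathbb{E}[P_k]=(1-\bar\gamma)(1-\mu)\,W+q\,S,$$ where $W=L(\sqrt{q}\,A,\bar P)$ and $S=L(\sqrt{q}\,A,Q)$.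
   Context: For a square matrix $T$ with $\rho(T)<1$ and a symmetric matrix $U$, $L(T,U)$ denotes the unique solution $V$ of the discrete-time Lyapunov equation $V=TVT^{\intercal}+U$, equivalently $L(T,U)=\sum_{j=0}^{\infty}T^jU(T^{\intercal})^j$. Here $P_k$ models the estimation error covariance of a remote legitimate user that receives the sensor's steady-state Kalman estimate (error covariance $\bar P$) only when the packet arrives ($\lambda_k=1$) and the sensor did not send noise ($u_k=1$), and otherwise predicts with the model $x_{k+1}=Ax_k+w_k$, $\mathrm{Cov}(w_k)=Q$. *)

(* Defs.v *)
From HB Require Import structures.
From mathcomp Require Import all_boot all_order all_algebra.
From mathcomp Require Import all_classical all_reals all_analysis.
From mathcomp Require complex.
Import complex.ComplexField.
Set Implicit Arguments.
Unset Strict Implicit.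
Unset Printing Implicit Defensive.
Import Order.TTheory GRing.Theory Num.Theory.
Import numFieldNormedType.Exports.
Local Open Scope ring_scope.

Section Defs.
Variable R : realType.

Definition cplx_mx n (A : 'M[R]_n) : 'M[complex.complex R]_n :=
  map_mx (fun x => complex.Complex x 0) A.

Definition cnorm2 (z : complex.complex R) : R :=
  complex.Re z ^+ 2 + complex.Im z ^+ 2.

Definition spectral_radius_lt1 n (A : 'M[R]_n) : Prop :=
  forall z : complex.complex R, eigenvalue (cplx_mx A) z -> cnorm2 z < 1.

Definition symmetric n (M : 'M[R]_n) : Prop := M^T = M.

Definition posdef n (M : 'M[R]_n) : Prop :=
  symmetric M /\ forall x : 'cV[R]_n, x != 0 -> 0 < (x^T *m M *m x) 0 0.

Definition possemidef n (M : 'M[R]_n) : Prop :=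
  symmetric M /\ forall x : 'cV[R]_n, 0 <= (x^T *m M *m x) 0 0.

Definition observable n m (A : 'M[R]_n) (C : 'M[R]_(m, n)) : Prop :=
  \rank (\mxcol_(k < n) (C *m A ^+ k)) = n.

Definition controllable n p (A : 'M[R]_n) (B : 'M[R]_(n, p)) : Prop :=
  \rank (\mxrow_(k < n) (A ^+ k *m B)) = n.

Definition prior n (A Q P : 'M[R]_n) : 'M[R]_n := A *m P *m A^T + Q.

Definition kgain n m (A Q P : 'M[R]_n) (C : 'M[R]_(m, n)) (Rn : 'M[R]_m)
  : 'M[R]_(n, m) :=
  prior A Q P *m C^T *m invmx (C *m prior A Q P *m C^T + Rn).

Definition dare n m (A Q : 'M[R]_n) (C : 'M[R]_(m, n)) (Rn : 'M[R]_m)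
  (P : 'M[R]_n) : Prop :=
  P = prior A Q P - prior A Q P *m C^T
        *m invmx (C *m prior A Q P *m C^T + Rn) *m C *m prior A Q P.

Definition stabilizing n m (A Q : 'M[R]_n) (C : 'M[R]_(m, n)) (Rn : 'M[R]_m)
  (P : 'M[R]_n) : Prop :=
  spectral_radius_lt1 ((1%:M - kgain A Q P C Rn *m C) *m A).

(* L(T,U) = sum_{j>=0} T^j U (T^T)^j  (entrywise limit of partial sums) *)
Definition lyap n (T U : 'M[R]_n) : 'M[R]_n :=
  \matrix_(i, j) limn (series (fun k : nat => (T ^+ k *m U *m (T^T) ^+ k) i j)).

(* The covariance recursion, pathwise.  lam k, u k : T -> bool stand for
   lambda_{k+1}, u_{k+1} (true = 1, false = 0). *)
Fixpoint Pseq {Omega : Type} n (A Q Pbar P0 : 'M[R]_n)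
  (lam u : nat -> Omega -> bool) (k : nat) (w : Omega) : 'M[R]_n :=
  match k with
  | 0 => P0
  | k'.+1 => if lam k' w && u k' w then Pbar
             else A *m Pseq A Q Pbar P0 lam u k' w *m A^T + Q
  end.

End Defs.

Local Open Scope classical_set_scope.

Definition iid_bernoulli_pair {d} {Omega : measurableType d} {R : realType}
  (P : probability Omega R) (lam u : nat -> Omega -> bool) (g mu : R) : Prop :=
  [/\ (forall k b, measurable [set w | lam k w = b]),
      (forall k b, measurable [set w | u k w = b]),
      (forall k, P [set w | lam k w = false] = g%:E),
      (forall k, P [set w | u k w = false] = mu%:E) &
      (forall (s1 s2 : seq nat) (a b : nat -> bool), uniq s1 -> uniq s2 ->
         P ((\bigcap_(k in [set k | k \in s1]) [set w | lam k w = a k])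
             `&` (\bigcap_(k in [set k | k \in s2]) [set w | u k w = b k]))
         = ((\prod_(k <- s1) P [set w | lam k w = a k])
             * (\prod_(k <- s2) P [set w | u k w = b k]))%E)].

(* Main.v *)
Require Import Defs.
From HB Require Import structures.
From mathcomp Require Import all_boot all_order all_algebra.
From mathcomp Require Import all_classical all_reals all_analysis.
From mathcomp Require Import complex.
From mathcomp Require Import ring lra zify.
Import Order.TTheory GRing.Theory Num.Theory.
Import numFieldNormedType.Exports.
Local Open Scope ring_scope.
Local Open Scope classical_set_scope.
Lemma scal_bnd (F : numFieldType) (d : nat -> F) (z c : F) :
  `|z| < 1 -> (forall k, `|d k.+1 - z * d k| <= c) ->
  exists D, forall k, `|d k| <= D.
Proof.
move=> z1 hc.
have c0 : 0 <= c by apply: le_trans (hc 0%N).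
have p1 : 0 < 1 - `|z| by rewrite subr_gt0.
exists (`|d 0%N| + c / (1 - `|z|)) => k; elim: k => [|k IH].
  by rewrite lerDl divr_ge0 // ltW.
have -> : d k.+1 = z * d k + (d k.+1 - z * d k) by rewrite addrC subrK.
apply: le_trans (ler_normD _ _) _.
rewrite normrM.
have h1 : `|z| * `|d k| <= `|z| * (`|d 0%N| + c / (1 - `|z|)).
  by rewrite ler_wpM2l.
apply: le_trans (lerD h1 (hc k)) _.
set D := _ + _ in h1 IH *.
have D0 : 0 <= D by apply: le_trans IH.
have : c <= (1 - `|z|) * D.
  rewrite /D mulrDr mulrCA divff ?gt_eqF // mulr1.
  by rewrite -subr_ge0 addrK; apply: mulr_ge0; [exact: ltW | exact: normr_ge0].
by rewrite mulrBl mul1r lerBrDr addrC.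
Qed.
Lemma mx_pow_bnd (F : numClosedFieldType) n' (M : 'M[F]_n'.+1) :
  (forall z, eigenvalue M z -> `|z| < 1) ->
  forall a b, exists D, forall k, `|(M ^+ k) a b| <= D.
Proof.
move=> hev.
have [rs Hrs] := closed_field_poly_normal (char_poly M).
rewrite (monicP (char_poly_monic M)) scale1r in Hrs.
have Hz : forall z, z \in rs -> `|z| < 1.
  by move=> z zr; apply: hev; rewrite eigenvalue_root_char Hrs root_prod_XsubC.
suff key : forall s, {subset s <= rs} -> forall X : 'M[F]_(n'.+1),
   (forall a b, exists D, forall k,
      `|(X * horner_mx M (\prod_(z <- s) ('X - z%:P)) * M ^+ k) a b| <= D) ->
   forall a b, exists D, forall k, `|(X * M ^+ k) a b| <= D.
  move=> a b; have [//||D HD] := key rs _ 1 _ a b.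
    move=> a' b'; exists 0 => k.
    by rewrite -Hrs Cayley_Hamilton mulr0 mul0r mxE normr0.
  by exists D => k; rewrite -[M ^+ k]mul1r.
elim=> [|z s IH] sub X HX.
  by move=> a b; have [D HD] := HX a b; exists D => k; move: (HD k); rewrite big_nil rmorph1 mulr1.
have zr : z \in rs by apply: sub; rewrite inE eqxx.
have sub' : {subset s <= rs} by move=> x xs; apply: sub; rewrite inE xs orbT.
have eq1 : forall k, X * (M - z%:M) * M ^+ k = X * M ^+ k.+1 - z *: (X * M ^+ k).
  move=> k; rewrite mulrBr mulrBl -mulrA -exprS.
  by rewrite -!mulmxE mul_mx_scalar -scalemxAl.
have H : forall a b, exists D, forall k, `|(X * (M - z%:M) * M ^+ k) a b| <= D.
  apply: IH sub' _ _ => a b; have [D HD] := HX a b; exists D => k; move: (HD k).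
  by rewrite big_cons rmorphM rmorphB /= horner_mx_X horner_mx_C !mulrA.
move=> a b; have [D HD] := H a b.
apply: (@scal_bnd F (fun k => (X * M ^+ k) a b) z D (Hz z zr)) => k.
by move: (HD k); rewrite eq1 !mxE.
Qed.
Lemma A_pow_bnd (R : realType) n (A : 'M[R]_n) : spectral_radius_lt1 A ->
  forall a b, exists K : R, forall k, `|(A ^+ k) a b| <= K.
Proof.
case: n A => [|n'] A hA a b; first by case: a.
have ev : forall z, eigenvalue (cplx_mx A) z -> `|z| < 1.
  by move=> z /hA h; rewrite normc_def ltcR -sqrtr1 ltr_sqrt.
have [D HD] := @mx_pow_bnd R[i] _ _ ev a b.
have cA : cplx_mx A = map_mx (real_complex R) A by apply/matrixP => i j; rewrite !mxE.
have hm : forall k, cplx_mx A ^+ k = map_mx (real_complex R) (A ^+ k).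
  elim=> [|k IH]; first by rewrite !expr0 map_mx1.
  by rewrite !exprS IH -!mulmxE cA map_mxM.
exists (complex.Re D) => k; move: (HD k); rewrite hm mxE normc_def /=.
rewrite expr0n /= addr0 sqrtr_sqr lecE => /andP[_ ->] //.
Qed.
Definition ev {Omega : Type} (lam u : nat -> Omega -> bool) (J I : seq nat) : set Omega :=
  [set w | all (fun j => lam j w && u j w) J && all (fun i => ~~ (lam i w && u i w)) I].

Lemma meas_all d (Omega : measurableType d) (f : nat -> Omega -> bool) (s : seq nat) :
  (forall i, measurable [set w | f i w]) -> measurable [set w | all (fun i => f i w) s].
Proof.
move=> hf; elim: s => [|i s IH].
  have -> : [set w : Omega | all (fun i => f i w) [::]] = setT.
    by apply/seteqP; split => w.
  exact: measurableT.
have -> : [set w | all (fun i => f i w) (i :: s)] =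
          [set w | f i w] `&` [set w | all (fun i => f i w) s].
  by apply/seteqP; split => w /=; [move/andP | move=> [-> ->]].
exact: measurableI.
Qed.

Lemma meas_ev d (Omega : measurableType d) (lam u : nat -> Omega -> bool) J I :
  (forall k b, measurable [set w | lam k w = b]) ->
  (forall k b, measurable [set w | u k w = b]) ->
  measurable (ev lam u J I).
Proof.
move=> hl hu.
have hr : forall i, measurable [set w | lam i w && u i w].
  move=> i; have -> : [set w | lam i w && u i w] =
      [set w | lam i w = true] `&` [set w | u i w = true].
    by apply/seteqP; split => w /=; [move/andP | move=> [-> ->]].
  exact: measurableI.
have -> : ev lam u J I = [set w | all (fun j => lam j w && u j w) J]
     `&` [set w | all (fun i => ~~ (lam i w && u i w)) I].
  by rewrite /ev; apply/seteqP; split => w /=; [move/andP | move=> [-> ->]].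
apply: measurableI; apply: meas_all => // i.
have -> : [set w | ~~ (lam i w && u i w)] = ~` [set w | lam i w && u i w].
  by apply/seteqP; split => w /=; case: (lam i w && u i w).
exact: measurableC.
Qed.

Lemma prod_cstE (R : realType) (s : seq nat) (x : R) :
  (\prod_(k <- s) x%:E)%E = (x ^+ size s)%:E.
Proof.
elim: s => [|k s IH]; first by rewrite big_nil.
by rewrite big_cons IH /= exprS EFinM.
Qed.

Lemma ev_prob d (Omega : measurableType d) (R : realType) (P : probability Omega R)
  (lam u : nat -> Omega -> bool) (g mu : R) :
  iid_bernoulli_pair P lam u g mu ->
  forall J I, uniq J -> uniq I -> all (fun i => i \notin J) I ->
  P (ev lam u J I) = ((((1 - g) * (1 - mu)) ^+ size J) *
                      (1 - (1 - g) * (1 - mu)) ^+ size I)%:E.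
Proof.
case=> hl hu pl pu ind.
have finP : forall A, measurable A -> (P A < +oo)%E.
  by move=> A mA; apply: le_lt_trans (probability_le1 P mA) _; rewrite ltry.
have plt : forall k, P [set w | lam k w = true] = (1 - g)%:E.
  move=> k; have -> : [set w | lam k w = true] = setT `\` [set w | lam k w = false].
    apply/seteqP; split => w /=; first by move=> ->.
    by case: (lam k w) => -[].
  rewrite measureD ?finP //.
  rewrite setTI EFinB; congr (_ - _)%E; [exact: probability_setT | exact: pl].
have put : forall k, P [set w | u k w = true] = (1 - mu)%:E.
  move=> k; have -> : [set w | u k w = true] = setT `\` [set w | u k w = false].
    apply/seteqP; split => w /=; first by move=> ->.
    by case: (u k w) => -[].
  rewrite measureD ?finP //.
  rewrite setTI EFinB; congr (_ - _)%E; [exact: probability_setT | exact: pu].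
move=> J0 I0; elim: I0 J0 => [|i I IH] J uJ uI dis.
  have -> : ev lam u J [::] =
    (\bigcap_(k in [set k | k \in J]) [set w | lam k w = (fun _ => true) k])
    `&` (\bigcap_(k in [set k | k \in J]) [set w | u k w = (fun _ => true) k]).
    rewrite /ev; apply/seteqP; split => w /=.
      rewrite andbT => /allP h; split => k /= kJ; by have /andP[] := h k kJ.
    move=> [h1 h2]; rewrite andbT; apply/allP => k kJ.
    by rewrite (h1 k kJ) (h2 k kJ).
  rewrite ind //.
  under eq_bigr do rewrite plt.
  under [X in (_ * X)%E]eq_bigr do rewrite put.
  by rewrite !prod_cstE -EFinM /= expr0 mulr1 exprMn.
move: uI dis => /= /andP[iI uI] /andP[iJ dis].
have -> : ev lam u J (i :: I) = ev lam u J I `\` ev lam u (i :: J) I.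
  rewrite /ev; apply/seteqP; split => w /=.
    by case: (lam i w && u i w); case: (all _ J); case: (all _ I).
  by case: (lam i w && u i w); case: (all _ J); case: (all _ I) => -[].
have mev : forall J I, measurable (ev lam u J I) by move=> *; exact: meas_ev.
rewrite measureD ?finP //.
have -> : ev lam u J I `&` ev lam u (i :: J) I = ev lam u (i :: J) I.
  rewrite /ev; apply/seteqP; split => w /=; first by move=> [].
  by move=> h; split => //; move: h; case: (lam i w && u i w) => //=.
have h1 := IH J uJ uI dis.
have h2 : P (ev lam u (i :: J) I) = (((1 - g) * (1 - mu)) ^+ (size J).+1 *
                      (1 - (1 - g) * (1 - mu)) ^+ size I)%:E.
  apply: IH => //=; first by rewrite iJ.
  apply/allP => k kI; rewrite inE negb_or (allP dis k kI) andbT.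
  by apply/eqP => ki; move: iI; rewrite -ki kI.
transitivity ((((1 - g) * (1 - mu)) ^+ size J * (1 - (1 - g) * (1 - mu)) ^+ size I)%:E
   - (((1 - g) * (1 - mu)) ^+ (size J).+1 * (1 - (1 - g) * (1 - mu)) ^+ size I)%:E)%E.
  by congr (_ - _)%E; [exact: h1 | exact: h2].
rewrite -EFinB; congr (_%:E); rewrite /= !exprS; ring.
Qed.
Fixpoint lr {Omega : Type} (lam u : nat -> Omega -> bool) (k : nat) (w : Omega)
  : option nat :=
  match k with
  | 0 => None
  | k'.+1 => if lam k' w && u k' w then Some 0%N else omap succn (lr lam u k' w)
  end.

Lemma lr_none {Omega : Type} (lam u : nat -> Omega -> bool) k w :
  (lr lam u k w == None) = all (fun i => ~~ (lam i w && u i w)) (iota 0 k).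
Proof.
elim: k => // k IH.
have -> : iota 0 k.+1 = iota 0 k ++ [:: k] by rewrite -[k.+1]addn1 iotaD.
rewrite all_cat /= andbT.
case: (lam k w && u k w) => /=; first by rewrite andbF.
by rewrite andbT -IH; case: (lr lam u k w).
Qed.

Lemma lr_some {Omega : Type} (lam u : nat -> Omega -> bool) k t w :
  (lr lam u k w == Some t) = [&& (t < k)%N, lam (k.-1 - t)%N w && u (k.-1 - t)%N w &
      all (fun i => ~~ (lam i w && u i w)) (iota (k - t) t)].
Proof.
elim: k t => [|k IH] t; first by [].
have -> : lr lam u k.+1 w =
  (if lam k w && u k w then Some 0%N else omap succn (lr lam u k w)) by [].
rewrite (_ : k.+1.-1 = k) //.
case hr: (lam k w && u k w).
  case: t => [|t]; first by rewrite subn0 hr.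
  rewrite ltnS subSS; case: (ltnP t k) => htk; last by [].
  have -> : iota (k - t) t.+1 = iota (k - t) t ++ [:: k].
    by rewrite -[t.+1]addn1 iotaD subnK // ltnW.
  by rewrite all_cat /= hr !andbF.
case: t => [|t].
  by rewrite subn0 hr andbF; case: (lr lam u k w).
have -> : (omap succn (lr lam u k w) == Some t.+1) = (lr lam u k w == Some t).
  by case: (lr lam u k w) => //= x; apply/eqP/eqP => [[->]|[->]].
rewrite IH ltnS subSS; case: (ltnP t k) => htk; last by [].
have -> : iota (k - t) t.+1 = iota (k - t) t ++ [:: k].
  by rewrite -[t.+1]addn1 iotaD subnK // ltnW.
rewrite all_cat /= hr /= andbT subnS; congr (_ && _).
by rewrite -subn1 -subnDA addnC subnDA subn1.
Qed.

Definition Sq {R : realType} {n} (A Q : 'M[R]_n) t :=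
  \sum_(j < t) A ^+ j *m Q *m A^T ^+ j.
Definition Mt {R : realType} {n} (A Q X : 'M[R]_n) t :=
  A ^+ t *m X *m A^T ^+ t + Sq A Q t.

Lemma Mt_step (R : realType) n (A Q X : 'M[R]_n) t :
  A *m Mt A Q X t *m A^T + Q = Mt A Q X t.+1.
Proof.
rewrite /Mt /Sq big_ord_recl /= !expr0 mulmx1 mul1mx.
rewrite !mulmxE mulrDr mulrDl mulr_sumr mulr_suml -addrA [_ + Q]addrC.
congr (_ + (_ + _)); first by rewrite exprS exprSr !mulrA.
apply: eq_bigr => j _.
by rewrite /bump /= add1n exprS exprSr !mulrA.
Qed.

Lemma Pseq_lr {Omega : Type} (R : realType) n (A Q Pbar P0 : 'M[R]_n)
  (lam u : nat -> Omega -> bool) k w :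
  Pseq A Q Pbar P0 lam u k w =
  match lr lam u k w with Some t => Mt A Q Pbar t | None => Mt A Q P0 k end.
Proof.
elim: k => [|k IH] /=.
  by rewrite /Mt /Sq !expr0 mulmx1 mul1mx big_ord0 addr0.
case: (lam k w && u k w).
  by rewrite /Mt /Sq !expr0 mulmx1 mul1mx big_ord0 addr0.
by rewrite IH; case: (lr lam u k w) => [t|] /=; rewrite Mt_step.
Qed.
Lemma unif_bnd (R : realType) n (A : 'M[R]_n) : spectral_radius_lt1 A ->
  exists K, forall k a b, `|(A ^+ k) a b| <= K.
Proof.
move=> hA; have h := @A_pow_bnd R n A hA.
have [Kf HK] := @choice _ _ (fun x K => forall k, `|(A ^+ k) x.1 x.2| <= K)
  (fun x => h x.1 x.2).
exists (\sum_x `|Kf x|) => k a b.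
apply: le_trans (HK (a, b) k) _; apply: le_trans (ler_norm _) _.
rewrite (bigD1 (a, b)) //= lerDl sumr_ge0 // => *; exact: normr_ge0.
Qed.

Lemma trX (R : realType) n (A : 'M[R]_n) t : A^T ^+ t = (A ^+ t)^T.
Proof.
elim: t => [|t IH]; first by rewrite !expr0 trmx1.
by rewrite exprS IH exprSr -!mulmxE trmx_mul.
Qed.

Lemma scX (R : realType) n (A : 'M[R]_n) (c : R) t : (c *: A) ^+ t = c ^+ t *: A ^+ t.
Proof.
elim: t => [|t IH]; first by rewrite !expr0 scale1r.
by rewrite exprS IH -!mulmxE -scalemxAl -scalemxAr scalerA -exprS mulmxE -exprS.
Qed.

Lemma ent_bnd (R : realType) n (A M : 'M[R]_n) K :
  (forall k a b, `|(A ^+ k) a b| <= K) ->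
  forall i j k, `|(A ^+ k *m M *m A^T ^+ k) i j| <= \sum_b (\sum_a K * `|M a b|) * K.
Proof.
move=> hK i j k; rewrite trX mxE.
apply: le_trans (ler_norm_sum _ _ _) _; apply: ler_sum => b _.
rewrite !mxE normrM; apply: ler_pM => //.
apply: le_trans (ler_norm_sum _ _ _) _; apply: ler_sum => a _.
rewrite normrM; apply: ler_wpM2r => //.
Qed.

Lemma ser_cvg (R : realType) (u : nat -> R) (B q : R) : 0 <= q < 1 ->
  (forall t, `|u t| <= B) -> cvgn (series (fun t => q ^+ t * u t)).
Proof.
move=> /andP[q0 q1] hu.
have B0 : 0 <= B by apply: le_trans (hu 0%N).
apply: normed_cvg.
apply: (@series_le_cvg R _ (geometric B q)).
- by move=> t; exact: normr_ge0.
- by move=> t; rewrite /geometric /= mulr_ge0 // exprn_ge0.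
- move=> t; rewrite /geometric /= normrM ger0_norm ?exprn_ge0 // mulrC.
  by rewrite ler_wpM2r // exprn_ge0.
- by apply: is_cvg_geometric_series; rewrite ger0_norm.
Qed.
Lemma int_simple d (Omega : measurableType d) (R : realType) (P : probability Omega R)
  (c : nat -> R) (E : nat -> set Omega) k :
  (forall t, measurable (E t)) ->
  P.-integrable setT (fun w => (\sum_(t < k) c t * \1_(E t) w)%:E) /\
  (\int[P]_w (\sum_(t < k) c t * \1_(E t) w)%:E =
     (\sum_(t < k) c t * fine (P (E t)))%:E)%E.
Proof.
move=> hm; elim: k => [|k [hI hE]].
  have -> : (fun w => (\sum_(t < 0) c t * \1_(E t) w)%:E) = cst 0%E.
    by apply: funext => w; rewrite big_ord0.
  by split; [exact: integrable0 | rewrite integral0 big_ord0].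
have -> : (fun w => (\sum_(t < k.+1) c t * \1_(E t) w)%:E) =
    ((fun w => (\sum_(t < k) c t * \1_(E t) w)%:E) \+
     (fun w => ((c k)%:E * (\1_(E k) w)%:E)%E))%E.
  by apply: funext => w; rewrite big_ord_recr /= EFinD EFinM.
have hI2 : P.-integrable setT (fun w => ((c k)%:E * (\1_(E k) w)%:E)%E).
  apply: integrableZl => //; exact: integrable_indic.
split; first exact: integrableD.
have hind : (\int[P]_x (\1_(E k) x)%:E = P (E k `&` setT))%E.
  exact: integral_indic.
have fin : P (E k) \is a fin_num.
  rewrite ge0_fin_numE ?measure_ge0 //.
  by apply: le_lt_trans (probability_le1 P (hm k)) _; rewrite ltry.
rewrite integralD //= hE integralZl //; last exact: integrable_indic.
rewrite hind setIT -(fineK fin).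
by rewrite big_ord_recr /= EFinD EFinM.
Qed.
Lemma ind_bool (T : Type) (R : realType) (f : T -> bool) w :
  \1_[set x | f x] w = (f w)%:R :> R.
Proof.
rewrite indicE; case h: (f w); first by rewrite mem_set.
by rewrite memNset // => /= hf; rewrite hf in h.
Qed.

Lemma set_some {Omega : Type} (lam u : nat -> Omega -> bool) k t : (t < k)%N ->
  [set w | lr lam u k w == Some t] = ev lam u [:: (k.-1 - t)%N] (iota (k - t) t).
Proof.
move=> tk; rewrite /ev; apply/seteqP; split => w /=; rewrite lr_some tk /= andbT //.
Qed.

Lemma set_none {Omega : Type} (lam u : nat -> Omega -> bool) k :
  [set w | lr lam u k w == None] = ev lam u [::] (iota 0 k).
Proof.
by rewrite /ev; apply/seteqP; split => w /=; rewrite lr_none.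
Qed.

Lemma exp_Pseq d (Omega : measurableType d) (R : realType) (P : probability Omega R)
  n (A Q Pbar P0 : 'M[R]_n) (lam u : nat -> Omega -> bool) (g mu : R) :
  iid_bernoulli_pair P lam u g mu ->
  forall k i j,
  (\int[P]_w ((Pseq A Q Pbar P0 lam u k w) i j)%:E =
   (\sum_(t < k) Mt A Q Pbar t i j * ((1 - g) * (1 - mu) * (1 - (1 - g) * (1 - mu)) ^+ t)
    + Mt A Q P0 k i j * (1 - (1 - g) * (1 - mu)) ^+ k)%:E)%E.
Proof.
move=> H k i j.
have [hl hu _ _ _] := H.
pose c t := if (t < k)%N then Mt A Q Pbar t i j else Mt A Q P0 k i j.
pose E t := [set w | lr lam u k w == if (t < k)%N then Some t else None].
have hm : forall t, measurable (E t).
  move=> t; rewrite /E; case: ifP => tk; first rewrite set_some //.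
    exact: meas_ev.
  by rewrite set_none; exact: meas_ev.
have pw : (fun w => ((Pseq A Q Pbar P0 lam u k w) i j)%:E) =
          (fun w => (\sum_(t < k.+1) c t * \1_(E t) w)%:E).
  apply: funext => w; congr (_%:E).
  rewrite Pseq_lr big_ord_recr /= /c /E ltnn ind_bool.
  case e: (lr lam u k w) => [t|] /=.
    have tk : (t < k)%N by move: (eqxx (Some t)); rewrite -{1}e lr_some => /andP[].
    rewrite mulr0 addr0 (bigD1 (Ordinal tk)) //= tk ind_bool e eqxx mulr1 big1 ?addr0 //.
    move=> t' /eqP ne; rewrite ltn_ord ind_bool e /=.
    suff -> : (Some t == Some (val t')) = false by rewrite mulr0.
    by apply/eqP => -[et]; apply: ne; apply: val_inj.
  rewrite mulr1 big1 ?add0r // => t' _; rewrite ltn_ord ind_bool e /= mulr0 //.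
rewrite pw; have [_ ->] := @int_simple _ _ _ P c E k.+1 hm.
congr (_%:E); rewrite big_ord_recr /= /c ltnn; congr (_ + _ * _).
  apply: eq_bigr => t _; rewrite ltn_ord; congr (_ * _).
  rewrite /E ltn_ord set_some // (@ev_prob _ _ _ _ _ _ _ _ H) //=.
  - by rewrite size_iota expr1.
  - exact: iota_uniq.
  - apply/allP => x; rewrite mem_iota inE => /andP[h1 h2].
    have tk := ltn_ord t; apply/eqP => ex; lia.
have -> : E k = [set w | lr lam u k w == None] by rewrite /E ltnn.
rewrite set_none (@ev_prob _ _ _ _ _ _ _ _ H) //=.
- by rewrite size_iota expr0 mul1r.
- exact: iota_uniq.
- exact/allP.
Qed.
Lemma tele (R : realType) (Z : nat -> R) (q : R) k :
  \sum_(t < k) (\sum_(l < t) Z l) * ((1 - q) * q ^+ t) + (\sum_(l < k) Z l) * q ^+ k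
  = q * \sum_(t < k) q ^+ t * Z t.
Proof.
elim: k => [|k IH]; first by rewrite !big_ord0 mul0r addr0 mulr0.
rewrite !big_ord_recr /=.
set a := \sum_(t < k) _.
have -> : a = q * (\sum_(t < k) q ^+ t * Z t) - (\sum_(l < k) Z l) * q ^+ k.
  by rewrite -IH addrK.
rewrite !exprS; ring.
Qed.

Lemma Mt_ent (R : realType) n (A Q M : 'M[R]_n) t i j :
  Mt A Q M t i j = (A ^+ t *m M *m A^T ^+ t) i j +
                   \sum_(l < t) (A ^+ l *m Q *m A^T ^+ l) i j.
Proof. by rewrite /Mt /Sq [LHS]mxE summxE. Qed.

Lemma sq_term (R : realType) n (A M : 'M[R]_n) (q : R) t i j : 0 <= q ->
  ((Num.sqrt q *: A) ^+ t *m M *m (Num.sqrt q *: A)^T ^+ t) i j =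
  q ^+ t * (A ^+ t *m M *m A^T ^+ t) i j.
Proof.
move=> q0; rewrite !trX !scX linearZ /= -!scalemxAl -!scalemxAr !scalerA.
by rewrite mxE -exprMn -expr2 sqr_sqrtr.
Qed.
Theorem lemma2 (R : realType) (n m : nat)
  (A : 'M[R]_n) (C : 'M[R]_(m, n)) (Q Qh : 'M[R]_n) (Rn : 'M[R]_m)
  (Pbar P0 : 'M[R]_n) (gbar mu : R)
  (d : measure_display) (Omega : measurableType d) (P : probability Omega R)
  (lam u : nat -> Omega -> bool) :
  spectral_radius_lt1 A ->
  posdef Q -> posdef Rn ->
  observable A C ->
  possemidef Qh -> Qh *m Qh = Q -> controllable A Qh ->
  posdef Pbar -> dare A Q C Rn Pbar -> stabilizing A Q C Rn Pbar ->
  0 < gbar < 1 -> 0 < mu < 1 ->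
  iid_bernoulli_pair P lam u gbar mu ->
  possemidef P0 ->
  let q := gbar + (1 - gbar) * mu in
  let W := lyap (Num.sqrt q *: A) Pbar in
  let S := lyap (Num.sqrt q *: A) Q in
  forall i j : 'I_n,
    (fun k : nat => (\int[P]_w ((Pseq A Q Pbar P0 lam u k w) i j)%:E)%E)
      @ \oo --> ((((1 - gbar) * (1 - mu)) *: W + q *: S) i j)%:E.
Proof.
move=> hA _ _ _ _ _ _ _ _ _ /andP[g0 g1] /andP[m0 m1] H _ q W S i j.
have pq : 1 - (1 - gbar) * (1 - mu) = q by rewrite /q; ring.
have q0 : 0 <= q by rewrite /q; nra.
have q1 : q < 1 by rewrite /q; nra.
have q01 : 0 <= q < 1 by rewrite q0 q1.
have [K hK] := @unif_bnd R n A hA.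
pose X t := (A ^+ t *m Pbar *m A^T ^+ t) i j.
pose Y t := (A ^+ t *m P0 *m A^T ^+ t) i j.
pose Z t := (A ^+ t *m Q *m A^T ^+ t) i j.
have cX := @ser_cvg R _ _ q q01 (fun t => @ent_bnd R n A Pbar K hK i j t).
have cY := @ser_cvg R _ _ q q01 (fun t => @ent_bnd R n A P0 K hK i j t).
have cZ := @ser_cvg R _ _ q q01 (fun t => @ent_bnd R n A Q K hK i j t).
set uX := (fun t => q ^+ t * _) in cX.
set uY := (fun t => q ^+ t * _) in cY.
set uZ := (fun t => q ^+ t * _) in cZ.
have eE : forall k, (\int[P]_w ((Pseq A Q Pbar P0 lam u k w) i j)%:E)%E =
   ((1 - gbar) * (1 - mu) * series uX k + q * series uZ k + uY k)%:E.
  move=> k; rewrite (@exp_Pseq _ _ _ P _ A Q Pbar P0 lam u gbar mu H k i j) pq.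
  congr (_%:E).
  under eq_bigr do rewrite Mt_ent [(_ + _) * _]mulrDl.
  rewrite Mt_ent big_split /= [(_ + _) * q ^+ k]mulrDl.
  have pq' : (1 - gbar) * (1 - mu) = 1 - q by rewrite -pq; ring.
  have e1 : \sum_(t < k) (A ^+ t *m Pbar *m A^T ^+ t) i j * ((1 - gbar) * (1 - mu) * q ^+ t)
            = (1 - gbar) * (1 - mu) * series uX k.
    rewrite /series /= big_mkord mulr_sumr; apply: eq_bigr => t _.
    rewrite /uX; ring.
  have e2 := @tele R (fun l => (A ^+ l *m Q *m A^T ^+ l) i j) q k.
  rewrite -pq' in e2.
  have e3 : \sum_(t < k) q ^+ t * (A ^+ t *m Q *m A^T ^+ t) i j = series uZ k.
    by rewrite /series /= big_mkord.
  rewrite e3 in e2; rewrite -e2 -e1 /uY; ring.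
have -> : (fun k => (\int[P]_w ((Pseq A Q Pbar P0 lam u k w) i j)%:E)%E) =
   (fun k => ((1 - gbar) * (1 - mu) * series uX k + q * series uZ k + uY k)%:E).
  by apply: funext => k; rewrite eE.
have eW : W i j = limn (series uX).
  rewrite /W /lyap mxE; congr (limn (series _)); apply: funext => t.
  by rewrite sq_term.
have eS : S i j = limn (series uZ).
  rewrite /S /lyap mxE; congr (limn (series _)); apply: funext => t.
  by rewrite sq_term.
have -> : ((1 - gbar) * (1 - mu) *: W + q *: S) i j =
   (1 - gbar) * (1 - mu) * W i j + q * S i j by rewrite !mxE.
rewrite eW eS.
apply: cvg_EFin; first by apply: nearW.
have c3 := cvg_series_cvg_0 cY.
have h := cvgD (cvgD (@cvgMl_tmp _ _ _ _ _ ((1 - gbar) * (1 - mu)) _ cX) (@cvgMl_tmp _ _ _ _ _ q _ cZ)) c3.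
rewrite addr0 in h; exact: h.
Qed.
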